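(* Let $I$ be a set and $\mathbb K$ a commutative ring. The map sending a weighted troupe $\boldsymbol{\tau}\colon\mathsf{BPT}(I)\to\mathbb K$ to its restriction $\boldsymbol{\tau}|_{\mathsf{Branch}(I)}$ is a bijection from the set of weighted troupes to the set of all functions $\mathsf{Branch}(I)\to\mathbb K$.
   Context: A binary plane tree is a rooted tree in which each child of a vertex is designated as a left child or a right child, and no vertex has more than one left child or more than one right child; trees are considered up to isomorphism, and the empty tree $\varnothing$ is allowed. A branch is a nonempty binary plane tree in which every vertex has at most one child. Let $\boxminus$ be a special symbol not a vertex of any tree. An $I$-coloring of a binary plane tree $T$ is a function $\chi\colon T\sqcup\{\boxminus\}\to I$. $\mathsf{BPT}(I)$ denotes the set of $I$-colored binary plane trees (including the empty tree) and $\mathsf{Branch}(I)$ the set of $I$-colored branches. Insertion: for nonempty $I$-colored trees $T_1,T_2$ with colorings $\chi_1,\chi_2$ and a vertex $v$ of $T_1$, the tree $\nabla_v(T_1,T_2)$ is formed by creating a new vertex $v^*$ that takes the place of $v$ in $T_1$ (attached to $v$'s former parent on the same side), making $v$ (with its subtrees) the left child of $v^*$, and attaching $T_2$ as the right subtree of $v^*$; its coloring is $\chi_1$ on $T_1\sqcup\{\boxminus\}$, $\chi_2$ on the vertices of $T_2$, and $v^*$ gets color $\chi_2(\boxminus)$. A weighted troupe is a function $\boldsymbol{\tau}\colon\mathsf{BPT}(I)\to\mathbb K$ such that $\boldsymbol{\tau}(\varnothing)=0$ and $\boldsymbol{\tau}(\nabla_v(T_1,T_2))=\boldsymbol{\tau}(T_1)\boldsymbol{\tau}(T_2)$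 for all nonempty $T_1,T_2\in\mathsf{BPT}(I)$ and all vertices $v$ of $T_1$. *)

(* Defs.v *)
From mathcomp Require Import all_boot all_algebra.
Set Implicit Arguments. Unset Strict Implicit. Unset Printing Implicit Defensive.
Import GRing.Theory.
Local Open Scope ring_scope.

(* Binary plane trees (up to isomorphism) with vertex labels in I.
   [Leaf] is the empty tree; [Node l x r] is a root of colour x with left
   subtree l and right subtree r (an empty subtree = no child on that side). *)
Inductive ctree (I : Type) : Type :=
| Leaf : ctree I
| Node : ctree I -> I -> ctree I -> ctree I.
Arguments Leaf {I}.

(* An I-coloured binary plane tree: the colour of the special symbol ⊟
   together with the vertex-coloured tree. *)
Definition BPT (I : Type) : Type := (I * ctree I)%type.

Fixpoint chain (I : Type) (t : ctree I) : Prop :=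
  match t with
  | Leaf => True
  | Node l _ r => (l = Leaf \/ r = Leaf) /\ chain l /\ chain r
  end.

Definition is_branch (I : Type) (T : BPT I) : Prop :=
  T.2 <> Leaf /\ chain T.2.

Definition Branch (I : Type) : Type := {T : BPT I | is_branch T}.

(* insertion t1 c2 t2 t : t is the vertex part of ∇_v(T1,T2) for some vertex v
   of t1, where T2 = (c2, t2) (c2 = χ2(⊟) colours the new vertex v* ). *)
Inductive insertion (I : Type) (c2 : I) (t2 : ctree I) : ctree I -> ctree I -> Prop :=
| ins_root l x r : insertion c2 t2 (Node l x r) (Node (Node l x r) c2 t2)
| ins_left l l' x r : insertion c2 t2 l l' -> insertion c2 t2 (Node l x r) (Node l' x r)
| ins_right l x r r' : insertion c2 t2 r r' -> insertion c2 t2 (Node l x r) (Node l x r').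

Definition weighted_troupe (I : Type) (K : comPzRingType) (tau : BPT I -> K) : Prop :=
  (forall c : I, tau (c, Leaf) = 0) /\
  (forall (c1 : I) (t1 : ctree I) (c2 : I) (t2 : ctree I) (t : ctree I),
      t1 <> Leaf -> t2 <> Leaf -> insertion c2 t2 t1 t ->
      tau (c1, t) = tau (c1, t1) * tau (c2, t2)).

Definition WTroupe (I : Type) (K : comPzRingType) : Type :=
  {tau : BPT I -> K | weighted_troupe tau}.

Definition restrict_to_branches (I : Type) (K : comPzRingType)
  (tau : WTroupe I K) : Branch I -> K :=
  fun b => proj1_sig tau (proj1_sig b).

(* Main.v *)
Require Import Defs.
From mathcomp Require Import all_boot all_algebra.
From mathcomp Require Import zify.
From Stdlib Require Import ClassicalEpsilon FunctionalExtensionality ProofIrrelevance Lia.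
Set Implicit Arguments. Unset Strict Implicit.
Import GRing.Theory.
Local Open Scope ring_scope.

Section Constr.
Variables (I : Type) (K : comPzRingType) (f : Branch I -> K).

Definition fext (T : BPT I) : K :=
  match excluded_middle_informative (is_branch T) with
  | left H => f (exist _ T H)
  | right _ => 0
  end.

Definition isLeaf (t : ctree I) : bool := if t is Leaf then true else false.

Fixpoint G (t : ctree I) : ctree I * K :=
  match t with
  | Leaf => (Leaf, 1)
  | Node l x r =>
    match l with
    | Leaf => (Node Leaf x (G r).1, (G r).2)
    | Node _ _ _ =>
      match r with
      | Leaf => (Node (G l).1 x Leaf, (G l).2)
      | Node _ _ _ => ((G l).1, (G l).2 * (fext (x, (G r).1) * (G r).2))
      end
    end
  end.

Lemma G_eq l x r : G (Node l x r) =
  if isLeaf l then (Node Leaf x (G r).1, (G r).2)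
  else if isLeaf r then (Node (G l).1 x Leaf, (G l).2)
  else ((G l).1, (G l).2 * (fext (x, (G r).1) * (G r).2)).
Proof. by destruct l, r. Qed.

Definition P (T : BPT I) : K :=
  if isLeaf T.2 then 0 else fext (T.1, (G T.2).1) * (G T.2).2.

Lemma isLeafF (t : ctree I) : t <> Leaf -> isLeaf t = false.
Proof. by destruct t. Qed.

Lemma ins_nl (c2 : I) t2 a b : insertion c2 t2 a b -> a <> Leaf /\ b <> Leaf.
Proof. by destruct 1. Qed.

Lemma G_ins (c2 : I) t2 t1 t : insertion c2 t2 t1 t -> t2 <> Leaf ->
  G t = ((G t1).1, (G t1).2 * P (c2, t2)).
Proof.
  induction 1 as [l x r|l l' x r H IH|l x r r' H IH]; intros Ht2.
  - rewrite G_eq /= (isLeafF Ht2) /P /= (isLeafF Ht2). by [].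
  - destruct (ins_nl H) as [Hl Hl'].
    rewrite !G_eq (isLeafF Hl) (isLeafF Hl') IH //=.
    destruct (isLeaf r) => //=. by rewrite mulrAC.
  - destruct (ins_nl H) as [Hr Hr'].
    rewrite !G_eq (isLeafF Hr) (isLeafF Hr') IH //=.
    destruct (isLeaf l) => //=. by rewrite !mulrA.
Qed.

Lemma P_troupe : weighted_troupe P.
Proof.
  split; first by [].
  intros c1 t1 c2 t2 t H1 H2 Hi.
  destruct (ins_nl Hi) as [_ Ht].
  rewrite /P /= (isLeafF Ht) (isLeafF H1) (G_ins Hi H2) /= !mulrA.
  by rewrite /P /= (isLeafF H2).
Qed.

Lemma G_chain t : chain t -> G t = (t, 1).
Proof.
  induction t as [|l IHl x r IHr]; first by [].
  intros [[Hl|Hr] [Cl Cr]].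
  - subst l. by rewrite G_eq /= IHr.
  - subst r. rewrite G_eq IHl //=. by destruct l.
Qed.

Lemma P_branch b : P (proj1_sig b) = f b.
Proof.
  destruct b as [[c t] H]. simpl.
  destruct H as [Hn Hc] eqn:E.
  rewrite /P /= (isLeafF Hn) G_chain //= mulr1 /fext.
  destruct (excluded_middle_informative _) as [H'|H'].
  - f_equal. apply: eq_sig_hprop => //. intros; apply proof_irrelevance.
  - by exfalso; apply H'.
Qed.

End Constr.

Fixpoint tsize (I : Type) (t : ctree I) : nat :=
  match t with Leaf => 0 | Node l _ r => S (tsize l + tsize r) end.

Lemma decomp (I : Type) (t : ctree I) : t <> Leaf -> ~ chain t ->
  exists t1 c2 t2, t1 <> Leaf /\ t2 <> Leaf /\ insertion c2 t2 t1 t /\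
    lt (tsize t1) (tsize t) /\ lt (tsize t2) (tsize t).
Proof.
  induction t as [|l IHl x r IHr]; first by [].
  intros _ Hc.
  destruct l as [|a y b]; [|destruct r as [|a' y' b']].
  - destruct r as [|a y b]; first by (exfalso; apply Hc; simpl; tauto).
    destruct IHr as [t1 [c2 [t2 [H1 [H2 [H3 [H4 H5]]]]]]] => //.
    + intros Hr; apply Hc; simpl; tauto.
    + exists (Node Leaf x t1), c2, t2. repeat split => //.
      * by apply ins_right.
      * simpl in *; lia.
      * simpl in *; lia.
  - destruct IHl as [t1 [c2 [t2 [H1 [H2 [H3 [H4 H5]]]]]]] => //.
    + intros Hl; apply Hc; simpl; tauto.
    + exists (Node t1 x Leaf), c2, t2. repeat split => //.
      * by apply ins_left.
      * simpl in *; lia.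
      * simpl in *; lia.
  - exists (Node a y b), x, (Node a' y' b'). repeat split => //.
    + apply ins_root.
    + simpl; lia.
    + simpl; lia.
Qed.

Lemma uniq_troupe (I : Type) (K : comPzRingType) (t1 t2 : BPT I -> K) :
  weighted_troupe t1 -> weighted_troupe t2 ->
  (forall T, is_branch T -> t1 T = t2 T) -> forall T, t1 T = t2 T.
Proof.
  intros [A1 B1] [A2 B2] Hb.
  assert (forall n (t : ctree I), le (tsize t) n -> forall c, t1 (c, t) = t2 (c, t)).
  { induction n as [|n IH]; intros t Hs c.
    - destruct t; simpl in Hs; [by rewrite A1 A2 | lia].
    - destruct (classic (t = Leaf)) as [->|Hn]; first by rewrite A1 A2.
      destruct (classic (chain t)) as [Hc|Hc]; first by apply Hb.
      destruct (decomp Hn Hc) as [u1 [c2 [u2 [H1 [H2 [H3 [H4 H5]]]]]]].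
      rewrite (B1 c _ _ _ _ H1 H2 H3) (B2 c _ _ _ _ H1 H2 H3).
      rewrite (IH u1) ?(IH u2) //; lia. }
  intros [c t]. by apply (H (tsize t)).
Qed.

Theorem proposition3p2 (I : Type) (K : comPzRingType) :
  bijective (@restrict_to_branches I K).
Proof.
  exists (fun f => exist _ (P f) (P_troupe f)).
  - intros [tau Ht].
    assert (E : P (restrict_to_branches (exist _ tau Ht)) = tau).
    { apply functional_extensionality. apply uniq_troupe => //.
      - apply P_troupe.
      - intros T HT. exact (P_branch _ (exist _ T HT)). }
    apply: eq_sig_hprop => //. intros; apply proof_irrelevance.
  - intros f. apply functional_extensionality => b.
    exact (P_branch f b).
Qed.
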